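(* Let $G$ be a finite abelian group of order $mn$, let $N \le G$ be a subgroup of order $n$, and let $D \subseteq G$ be a semiregular $(m,n,k,\lambda_1,\lambda_2)$-divisible difference set in $G$ relative to $N$. Let $\{\eta_j\}_{j=1}^m$ be an enumeration of the annihilator $N^\perp$, and let $\{\chi_i\}_{i=1}^n$ be a set of coset representatives of $\widehat{G}/N^\perp$. For each $1\le i\le n$ and $1 \le j \le m$ define the vector \[ e^i_j := \frac{1}{\sqrt{k}}\big((\chi_i\eta_j)(g)\big)_{g\in D}\in\mathbb{C}^k \] (coordinates indexed by the elements of $D$). Then for each $i$, $\{e^i_j\}_{j=1}^m$ is a set of $m$ flat orthonormal vectors in $\mathbb{C}^k$. Moreover, setting $\mathcal{W}_i=\operatorname{span}\{e^i_j\}_{j=1}^m$ for $1\le i\le n$, the collection $\{\mathcal{W}_i\}_{i=1}^n$ of $n$ subspaces of dimension $m$ is an equichordal tight fusion frame for $\mathbb{C}^k$ with fusion frame bound $nm/k$.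
   Context: $\widehat{G}$ denotes the group (under pointwise multiplication) of characters, i.e. homomorphisms $\chi:G\to\{z\in\mathbb{C}:|z|=1\}$; $\chi_0$ is the principal character (constantly $1$). For a subgroup $N\le G$, $N^\perp=\{\chi\in\widehat{G}:\chi(h)=1\text{ for all }h\in N\}$. A subset $D\subseteq G$ of size $k$ is an $(m,n,k,\lambda_1,\lambda_2)$-divisible difference set relative to $N$ (where $|G|=mn$, $|N|=n$) if the multiset $\{d-d': d,d'\in D, d\neq d'\}$ contains each element of $G\setminus N$ exactly $\lambda_2$ times and each element of $N\setminus\{0\}$ exactly $\lambda_1$ times; it is semiregular if moreover $k>\lambda_1$ and $k^2-\lambda_2 mn=0$. A vector is flat if all its coordinates have equal modulus. A collection of $m$-dimensional subspaces $\{\mathcal{W}_i\}_{i=1}^n$ of $\mathbb{F}^k$ with orthogonal projections $P_i$ is a tight fusion frame with bound $A$ if $\sum_{i=1}^n P_i=AI_k$. It is equichordal if, choosing for each $i$ a matrix $L_i$ whose columns are an orthonormal basis of $\mathcal{W}_i$, $\operatorname{trace}(L_i^*L_jL_j^*L_i)$ $(=\operatorname{trace}(P_iP_j))$ is the same for all $i\neq j$. *)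

(* Defs.v *)
From HB Require Import structures.
From mathcomp Require Import all_boot all_order all_algebra all_field.
Set Implicit Arguments. Unset Strict Implicit. Unset Printing Implicit Defensive.
Import Order.TTheory GRing.Theory Num.Theory.
Local Open Scope ring_scope.

(* A finite abelian group is modelled as a finite Z-module G (written additively),
   the whole type being the group. Complex numbers: algC. *)

Section Defs.
Variable G : finZmodType.

Definition is_subgroup (N : {set G}) : Prop :=
  0 \in N /\ (forall x y, x \in N -> y \in N -> x - y \in N).

Definition is_character (chi : G -> algC) : Prop :=
  (forall x y, chi (x + y) = chi x * chi y) /\ (forall x, `|chi x| = 1).

Definition in_annihilator (N : {set G}) (chi : G -> algC) : Prop :=
  is_character chi /\ (forall h, h \in N -> chi h = 1).

Definition diff_count (D : {set G}) (g : G) : nat :=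
  #|[set p : G * G | [&& p.1 \in D, p.2 \in D, p.1 != p.2 & p.1 - p.2 == g]]|.

Definition divisible_diff_set (m n k l1 l2 : nat) (N D : {set G}) : Prop :=
  #|G| = (m * n)%N /\ #|N| = n /\ #|D| = k /\
  (forall g, g \notin N -> diff_count D g = l2) /\
  (forall g, g \in N -> g != 0 -> diff_count D g = l1).

Definition semiregular_dds (m n k l1 l2 : nat) (N D : {set G}) : Prop :=
  divisible_diff_set m n k l1 l2 N D /\ (l1 < k)%N /\ (k ^ 2 = l2 * (m * n))%N.

End Defs.

(* vectors in C^k are row vectors; standard inner product (conj-linear in 2nd arg) *)
Definition dotc (k : nat) (u v : 'rV[algC]_k) : algC := \sum_(a < k) u 0 a * (v 0 a)^*.

Definition flat (k : nat) (u : 'rV[algC]_k) : Prop := forall a b, `|u 0 a| = `|u 0 b|.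

Definition adjmx (p q : nat) (A : 'M[algC]_(p, q)) : 'M[algC]_(q, p) := (map_mx Num.conj A)^T.

(* P is the orthogonal projection onto the row space of W (acting on row vectors
   by v |-> v *m P): idempotent, self-adjoint, with image the span of W *)
Definition is_orthoproj (k r : nat) (W : 'M[algC]_(r, k)) (P : 'M[algC]_k) : Prop :=
  P *m P = P /\ adjmx P = P /\ (P == W)%MS.

(* e^i_j = k^{-1/2} ((chi_i eta_j)(g))_{g in D}, coordinates indexed by D via enum_val *)
Definition frame_vec (G : finZmodType) (D : {set G}) (chi eta : G -> algC)
  : 'rV[algC]_#|D| :=
  \row_(a < #|D|) ((chi (enum_val a) * eta (enum_val a)) / sqrtC (#|D|%:R)).

(* W_i, given by the matrix whose rows are e^i_1, ..., e^i_m *)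
Definition span_mx (G : finZmodType) (D : {set G}) (m : nat) (chi : G -> algC)
  (eta : 'I_m -> G -> algC) : 'M[algC]_(m, #|D|) :=
  \matrix_(j < m, a < #|D|) frame_vec D chi (eta j) 0 a.

(* Main.v *)
Require Import Defs.
From HB Require Import structures.
From mathcomp Require Import all_boot all_order all_algebra all_field.
From Stdlib Require Import FunctionalExtensionality.
From mathcomp Require Import ring.
Import Order.TTheory GRing.Theory Num.Theory.
Local Open Scope ring_scope.



Lemma char_nz {G : finZmodType} (f : G -> algC) x : is_character f -> f x != 0.
Proof. by case=> _ h; rewrite -normr_eq0 h oner_eq0. Qed.

Lemma char0 {G : finZmodType} (f : G -> algC) : is_character f -> f 0 = 1.
Proof.
move=> cf; have nz := @char_nz _ _ 0 cf; case: cf => hM _.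
have := hM 0 0; rewrite addr0 => e.
by apply: (mulfI nz); rewrite -e mulr1.
Qed.

Lemma char_conjM {G : finZmodType} (f : G -> algC) x : is_character f -> f x * (f x)^* = 1.
Proof. by case=> _ h; rewrite -normCK h expr1n. Qed.

Lemma char_conj {G : finZmodType} (f : G -> algC) x : is_character f -> (f x)^* = (f x)^-1.
Proof.
move=> cf; apply: (mulfI (@char_nz _ _ x cf)); rewrite char_conjM // mulfV //; exact: (@char_nz _ _ x).
Qed.

Lemma charM {G : finZmodType} (f g : G -> algC) :
  is_character f -> is_character g -> is_character (fun x => f x * g x).
Proof.
case=> fM fN [gM gN]; split=> [x y|x]; last by rewrite normrM fN gN mulr1.
by rewrite fM gM mulrACA.
Qed.

Lemma charC {G : finZmodType} (f : G -> algC) :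
  is_character f -> is_character (fun x => (f x)^*).
Proof.
case=> fM fN; split=> [x y|x]; first by rewrite fM rmorphM.
by rewrite norm_conjC fN.
Qed.

Lemma char1 {G : finZmodType} : is_character (fun _ : G => (1 : algC)).
Proof. by split=> [x y|x]; rewrite ?mulr1 ?normr1. Qed.

Lemma char_sumG {G : finZmodType} (f : G -> algC) g :
  is_character f -> f g != 1 -> \sum_x f x = 0.
Proof.
move=> cf ng; have e : \sum_x f x = f g * \sum_x f x.
  rewrite mulr_sumr (reindex_inj (addrI g)) /=; apply: eq_bigr => x _.
  by case: cf => ->.
apply/eqP; move: e => /eqP; rewrite -subr_eq0 -{1}(mul1r (\sum_x f x)) -mulrBl.
by rewrite mulf_eq0 subr_eq0 eq_sym (negbTE ng).
Qed.

Lemma subgroupD {G : finZmodType} (N : {set G}) x y :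
  is_subgroup N -> x \in N -> y \in N -> x + y \in N.
Proof.
case=> N0 NB xN yN; have := NB 0 y N0 yN; rewrite sub0r => nyN.
by have := NB x (- y) xN nyN; rewrite opprK.
Qed.

Lemma char_sumN {G : finZmodType} (N : {set G}) (f : G -> algC) h :
  is_subgroup N -> is_character f -> h \in N -> f h != 1 -> \sum_(x in N) f x = 0.
Proof.
move=> sN cf hN ng; have e : \sum_(x in N) f x = f h * \sum_(x in N) f x.
  rewrite mulr_sumr (reindex_inj (addrI h)) /=.
  have eN : forall x, (h + x \in N) = (x \in N).
    move=> x; apply/idP/idP => [hx|xN]; last exact: subgroupD.
    have := @subgroupD _ _ (-h) _ sN; move/(_ (h + x)); rewrite addKr; apply=> //.
    by case: sN => N0 NB; have := NB 0 h N0 hN; rewrite sub0r.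
  rewrite (eq_bigl (fun x => x \in N)) => [|x]; last by rewrite eN.
  by apply: eq_bigr => x _; case: cf => ->.
apply/eqP; move: e => /eqP; rewrite -subr_eq0 -{1}(mul1r (\sum_(x in N) f x)) -mulrBl.
by rewrite mulf_eq0 subr_eq0 eq_sym (negbTE ng).
Qed.
Arguments char_sumG {G f g}.
Arguments char_sumN {G N f h}.
Arguments charM {G f g}.
Arguments charC {G f}.



Lemma dc0 {G : finZmodType} (D : {set G}) : diff_count D 0 = 0%N.
Proof.
apply/eqP; rewrite cards_eq0; apply/eqP/setP => p; rewrite !inE.
by rewrite subr_eq0; case: (p.1 == p.2); rewrite !andbF.
Qed.

Lemma dds_sum {G : finZmodType} (N D : {set G}) (f : G -> algC) m n k l1 l2 :
  divisible_diff_set m n k l1 l2 N D -> is_subgroup N -> is_character f ->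
  (\sum_(d in D) f d) * (\sum_(d in D) f d)^* =
  k%:R + l1%:R * (\sum_(x in N) f x - 1) + l2%:R * (\sum_x f x - \sum_(x in N) f x).
Proof.
move=> [_ [_ [cD [h2 h1]]]] [N0 _] cf.
have fB : forall d d', f d * (f d')^* = f (d - d').
  move=> d d'; rewrite char_conj //; apply: (mulIf (@char_nz _ _ d' cf)).
  by rewrite mulfVK ?(@char_nz _ _ d' cf) //; case: cf => <- _; rewrite subrK.
rewrite rmorph_sum mulr_suml.
under eq_bigr => d dD do rewrite mulr_sumr (bigD1 d) //= fB subrr (char0 _ cf).
rewrite big_split /= sumr_const cD pair_big_dep /=.
rewrite (partition_big (fun p => p.1 - p.2) predT) //=.
have inner : forall g, \sum_(p | ((p.1 \in D) && ((p.2 \in D) && (p.2 != p.1))) && (p.1 - p.2 == g))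
    (f p.1 * (f p.2)^*) = (diff_count D g)%:R * f g.
  move=> g; rewrite (eq_bigr (fun _ => f g)); last by move=> p /andP[_ /eqP <-]; rewrite fB.
  rewrite /diff_count mulr_natl -sumr_const; apply: eq_bigl => p.
  rewrite inE; do 2 case: (_ \in D) => //=; by rewrite [p.2 == _]eq_sym.
under eq_bigr => g _ do rewrite inner.
rewrite (bigID (fun g => g \in N)) /= (bigD1 0) //= dc0 mul0r add0r.
have eG : \sum_x f x = \sum_(x in N) f x + \sum_(x | x \notin N) f x.
  by rewrite (bigID (fun g => g \in N)).
have eN : \sum_(x in N) f x = f 0 + \sum_(x in N | x != 0) f x by rewrite (bigD1 0).
rewrite eG eN (char0 _ cf).
rewrite (eq_bigr (fun i => l1%:R * f i)); last by move=> g /andP[gN g0]; rewrite h1.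
rewrite [\sum_(i | i \notin N) _](eq_bigr (fun i => l2%:R * f i)); last by move=> g gN; rewrite h2.
rewrite -!mulr_sumr; ring.
Qed.
Arguments dds_sum {G N D f m n k l1 l2}.

Lemma dds_perp {G : finZmodType} (N D : {set G}) (f : G -> algC) m n k l1 l2 g :
  semiregular_dds m n k l1 l2 N D -> is_subgroup N -> is_character f ->
  (forall h, h \in N -> f h = 1) -> f g != 1 -> \sum_(d in D) f d = 0.
Proof.
move=> [dd [_ hk]] sN cf fN fg.
have := dds_sum dd sN (@char1 G); rewrite !sumr_const.
have [cG [cN [cD _]]] := dd.
have cG2 : #|(xpredT : pred G)| = (m * n)%N := cG.
rewrite cN cD cG2 conjC_nat natrM => e1.
have := dds_sum dd sN cf; rewrite (char_sumG cf fg).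
rewrite [\sum_(x in N) f x](eq_bigr (fun _ => 1)); last exact: fN.
rewrite sumr_const cN => e2.
have hk' : (k%:R : algC) * k%:R = l2%:R * (m%:R * n%:R) by rewrite -!natrM -hk mulnn.
have : (\sum_(d in D) f d) * (\sum_(d in D) f d)^* = 0.
  rewrite e2.
  have e3 : l2%:R * (m%:R * n%:R) - (k%:R + l1%:R * (n%:R - 1) + l2%:R * (m%:R * n%:R - n%:R)) = 0 :> algC.
    by rewrite -hk' e1 subrr.
  apply/eqP; rewrite -oppr_eq0; apply/eqP; rewrite -[RHS]e3; ring.
by move/eqP; rewrite mulf_eq0 conjC_eq0 orbb => /eqP.
Qed.

Lemma dds_nonperp {G : finZmodType} (N D : {set G}) (f : G -> algC) m n k l1 l2 h :
  divisible_diff_set m n k l1 l2 N D -> is_subgroup N -> is_character f ->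
  h \in N -> f h != 1 ->
  (\sum_(d in D) f d) * (\sum_(d in D) f d)^* = k%:R - l1%:R.
Proof.
move=> dd sN cf hN fh; rewrite (dds_sum dd sN cf) (char_sumN sN cf hN fh).
have hG : f h != 1 := fh.
rewrite (char_sumG cf hG); ring.
Qed.



Lemma sqrt_conjM (x : nat) : sqrtC (x%:R : algC) * (sqrtC (x%:R : algC))^* = x%:R.
Proof.
rewrite geC0_conj ?sqrtC_ge0 ?ler0n // -expr2 sqrtCK //.
Qed.

Lemma aux (x y s : algC) : x / s * (y / s)^* = x * y^* / (s * s^*).
Proof. by rewrite fmorph_div invfM mulrACA. Qed.

Lemma dotc_frame {G : finZmodType} (D : {set G}) (c e c' e' : G -> algC) :
  dotc (frame_vec D c e) (frame_vec D c' e') =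
  (\sum_(d in D) (c d * e d) * (c' d * e' d)^*) / #|D|%:R.
Proof.
rewrite /dotc mulr_suml [RHS]big_enum_val /=; apply: eq_bigr => a _; rewrite !mxE.
by rewrite aux sqrt_conjM.
Qed.

Lemma flat_frame {G : finZmodType} (D : {set G}) (c e : G -> algC) :
  is_character c -> is_character e -> flat (frame_vec D c e).
Proof.
by move=> [_ cN] [_ eN]; rewrite /flat => a b; rewrite !mxE !normf_div !normrM !cN !eN.
Qed.

Lemma card_D_neq0 {G : finZmodType} (N D : {set G}) m n k l1 l2 :
  semiregular_dds m n k l1 l2 N D -> (#|D|%:R : algC) != 0.
Proof.
move=> [[_ [_ [cD _]]] [hl _]]; rewrite pnatr_eq0 cD -lt0n.
exact: leq_ltn_trans hl.
Qed.

Lemma ortho_frame {G : finZmodType} (N D : {set G}) m n k l1 l2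
  (eta : 'I_m -> G -> algC) (c : G -> algC) j j' :
  semiregular_dds m n k l1 l2 N D -> is_subgroup N ->
  (forall j, in_annihilator N (eta j)) -> injective eta -> is_character c ->
  dotc (frame_vec D c (eta j)) (frame_vec D c (eta j')) = (j == j')%:R.
Proof.
move=> sr sN ann inj cc.
rewrite dotc_frame.
have eq : forall d, (c d * eta j d) * (c d * eta j' d)^* = eta j d * (eta j' d)^*.
  by move=> d; rewrite rmorphM mulrACA char_conjM // mul1r.
under eq_bigr do rewrite eq.
have k0 := @card_D_neq0 _ N D _ _ _ _ _ sr.
case: eqP => [<-|ne].
  rewrite (eq_bigr (fun _ => 1)); last by move=> d _; apply: char_conjM; case: (ann j).
  by rewrite sumr_const mulfV.
case: (boolP [forall g, eta j g * (eta j' g)^* == 1]) => [/forallP all1|/forallPn [g hg]].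
  exfalso; apply: ne; apply: inj; apply: functional_extensionality => g.
  have /eqP := all1 g => e1.
  have e2 : (eta j' g)^* * eta j' g = 1 by rewrite mulrC char_conjM //; case: (ann j').
  by rewrite -[LHS]mulr1 -e2 mulrA e1 mul1r.
rewrite (@dds_perp _ N D (fun g => eta j g * (eta j' g)^*) _ _ _ _ _ g sr sN) ?mul0r //.
- by apply: charM; [case: (ann j) | apply: charC; case: (ann j')].
- by move=> h hN; rewrite (proj2 (ann j) h hN) (proj2 (ann j') h hN) conjC1 mulr1.
Qed.



Lemma adjmxM p q r (A : 'M[algC]_(p, q)) (B : 'M[algC]_(q, r)) :
  adjmx (A *m B) = adjmx B *m adjmx A.
Proof. by rewrite /adjmx map_mxM trmx_mul. Qed.

Lemma adjmxK p q (A : 'M[algC]_(p, q)) : adjmx (adjmx A) = A.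
Proof. by apply/matrixP => i j; rewrite !mxE conjCK. Qed.

Lemma rank_orth p q (M : 'M[algC]_(p, q)) : M *m adjmx M = 1%:M -> \rank M = p.
Proof.
move=> h; apply/eqP; rewrite eqn_leq rank_leq_row /=.
by have := mxrankM_maxl M (adjmx M); rewrite h mxrank1.
Qed.

Lemma proj_exists p q (M : 'M[algC]_(p, q)) : M *m adjmx M = 1%:M ->
  is_orthoproj M (adjmx M *m M).
Proof.
move=> h; split; first by rewrite mulmxA -(mulmxA _ M) h mulmx1.
split; first by rewrite adjmxM adjmxK.
apply/andP; split; first by apply/submxP; exists (adjmx M).
by apply/submxP; exists M; rewrite mulmxA h mul1mx.
Qed.

Lemma proj_unique p q (M : 'M[algC]_(p, q)) P : M *m adjmx M = 1%:M ->
  is_orthoproj M P -> P = adjmx M *m M.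
Proof.
move=> h [PP [aP /andP [/submxP [A eA] /submxP [B eB]]]].
have MP : M *m P = M by rewrite eB -mulmxA PP.
have eP : P = adjmx M *m adjmx A by rewrite -aP eA adjmxM.
have e1 : adjmx M *m M *m P = adjmx M *m M by rewrite -mulmxA MP.
by rewrite -e1 {2}eP !mulmxA -(mulmxA _ M) h mulmx1 -eP.
Qed.



Lemma psi_inj {G : finZmodType} (N : {set G}) m n
  (eta : 'I_m -> G -> algC) (chi : 'I_n -> G -> algC) (r r' : 'I_n * 'I_m) :
  (forall j, in_annihilator N (eta j)) -> injective eta ->
  (forall i, is_character (chi i)) ->
  (forall psi, is_character psi ->
     exists! i, in_annihilator N (fun g => psi g / chi i g)) ->
  (forall x, chi r.1 x * eta r.2 x = chi r'.1 x * eta r'.2 x) -> r = r'.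
Proof.
move=> ann inj cc uniq e.
have cP : is_character (fun x => chi r.1 x * eta r.2 x).
  by apply: charM => //; case: (ann r.2).
have [i [_ Hu]] := uniq _ cP.
have h1 : r.1 = r'.1.
  have a1 : in_annihilator N (fun g => chi r.1 g * eta r.2 g / chi r.1 g).
    have -> : (fun g => chi r.1 g * eta r.2 g / chi r.1 g) = eta r.2.
      apply: functional_extensionality => g; rewrite mulrC mulKf //.
      exact: (@char_nz _ _ g (cc r.1)).
    exact: ann.
  have a2 : in_annihilator N (fun g => chi r.1 g * eta r.2 g / chi r'.1 g).
    have -> : (fun g => chi r.1 g * eta r.2 g / chi r'.1 g) = eta r'.2.
      apply: functional_extensionality => g; rewrite e mulrC mulKf //.
      exact: (@char_nz _ _ g (cc r'.1)).
    exact: ann.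
  by rewrite -(Hu _ a1) -(Hu _ a2).
have h2 : r.2 = r'.2.
  apply: inj; apply: functional_extensionality => x.
  apply: (mulfI (@char_nz _ _ x (cc r.1))); rewrite e h1 //.
by case: r r' h1 h2 {e cP Hu} => [a b] [a' b'] /= -> ->.
Qed.

Lemma row_orth {G : finZmodType} (N : {set G}) m n
  (eta : 'I_m -> G -> algC) (chi : 'I_n -> G -> algC) (r r' : 'I_n * 'I_m) :
  (forall j, in_annihilator N (eta j)) -> injective eta ->
  (forall i, is_character (chi i)) ->
  (forall psi, is_character psi ->
     exists! i, in_annihilator N (fun g => psi g / chi i g)) ->
  \sum_x (chi r.1 x * eta r.2 x) * (chi r'.1 x * eta r'.2 x)^* = #|G|%:R * (r == r')%:R.
Proof.
move=> ann inj cc uniq.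
have cP : forall r : 'I_n * 'I_m, is_character (fun x => chi r.1 x * eta r.2 x).
  by move=> s; apply: charM => //; case: (ann s.2).
case: eqP => [<-|ne].
  rewrite (eq_bigr (fun _ => 1)); last by move=> x _; apply: (@char_conjM _ (fun x => chi r.1 x * eta r.2 x)); exact: cP.
  by rewrite sumr_const mulr1.
rewrite mulr0.
case: (boolP [forall x, (chi r.1 x * eta r.2 x) * (chi r'.1 x * eta r'.2 x)^* == 1])
  => [/forallP all1|/forallPn [g hg]].
  exfalso; apply: ne; apply: (@psi_inj _ N m n eta chi r r' ann inj cc uniq) => x.
  have /eqP := all1 x => e1.
  have e2 := @char_conjM _ _ x (cP r').
  have e3 : (chi r'.1 x * eta r'.2 x)^* * (chi r'.1 x * eta r'.2 x) = 1 by rewrite mulrC.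
  by rewrite -[LHS]mulr1 -e3 mulrA e1 mul1r.
apply: (char_sumG (charM (cP r) (charC (cP r')))) hg.
Qed.

Lemma col_orth {G : finZmodType} (N : {set G}) m n
  (eta : 'I_m -> G -> algC) (chi : 'I_n -> G -> algC) (x y : G) :
  #|G| = (m * n)%N ->
  (forall j, in_annihilator N (eta j)) -> injective eta ->
  (forall i, is_character (chi i)) ->
  (forall psi, is_character psi ->
     exists! i, in_annihilator N (fun g => psi g / chi i g)) ->
  \sum_i \sum_j (chi i x * eta j x)^* * (chi i y * eta j y) = #|G|%:R * (x == y)%:R.
Proof.
move=> cG ann inj cc uniq.
pose T := ('I_n * 'I_m)%type.
have E : #|G| = #|{: T}| by rewrite card_prod !card_ord cG mulnC.
pose f (a : 'I_#|G|) : T := enum_val (cast_ord E a).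
pose g (r : T) : 'I_#|G| := cast_ord (esym E) (enum_rank r).
have fK : cancel f g by move=> a; rewrite /f /g enum_valK cast_ordK.
have gK : cancel g f by move=> r; rewrite /f /g cast_ordKV enum_rankK.
pose psi (r : T) (z : G) := chi r.1 z * eta r.2 z.
pose U : 'M[algC]_#|G| := \matrix_(a, c) psi (f a) (enum_val c).
have hcol : forall F : G -> algC, \sum_(c < #|G|) F (enum_val c) = \sum_z F z.
  by move=> F; rewrite -big_enum_val.
have R1 : U *m adjmx U = (#|G|%:R : algC)%:M.
  apply/matrixP => a b; rewrite !mxE.
  under eq_bigr do rewrite !mxE.
  rewrite (hcol (fun z => psi (f a) z * (psi (f b) z)^*)).
  rewrite (@row_orth _ N m n eta chi (f a) (f b) ann inj cc uniq).
  by rewrite (inj_eq (can_inj fK)) mulr_natr.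
have p0 : (#|G|%:R : algC) != 0.
  by rewrite pnatr_eq0 -lt0n; apply/card_gt0P; exists 0.
have R2 : adjmx U *m U = (#|G|%:R : algC)%:M.
  have h : U *m ((#|G|%:R)^-1 *: adjmx U) = 1%:M.
    rewrite -scalemxAr R1; apply/matrixP => i j; rewrite !mxE.
    by case: (i == j); rewrite ?mulr1n ?mulr0n ?mulr0 ?mulVf.
  have := mulmx1C h; rewrite -scalemxAl => h2.
  have e : adjmx U *m U = #|G|%:R *: (#|G|%:R^-1 *: (adjmx U *m U)) by rewrite scalerA mulfV // scale1r.
  by rewrite e h2 scalemx1.
have := congr1 (fun A : 'M[algC]_#|G| => A (enum_rank x) (enum_rank y)) R2.
rewrite /= !mxE /adjmx.
rewrite (eq_bigr (fun c => (psi (f c) x)^* * psi (f c) y)); last first.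
  by move=> c _; rewrite !mxE !enum_rankK.
rewrite (inj_eq enum_rank_inj) mulr_natr => <-.
rewrite pair_big /=.
rewrite (reindex f); last by apply: onW_bij; exists g; [exact: fK | exact: gK].
by apply: eq_bigr.
Qed.



Lemma nonperp {G : finZmodType} (N : {set G}) m n
  (eta : 'I_m -> G -> algC) (chi : 'I_n -> G -> algC) i i' j j' :
  (forall j, in_annihilator N (eta j)) ->
  (forall i, is_character (chi i)) ->
  (forall psi, is_character psi ->
     exists! i, in_annihilator N (fun g => psi g / chi i g)) ->
  i != i' ->
  exists2 h, h \in N & (chi i h * eta j h) * (chi i' h * eta j' h)^* != 1.
Proof.
move=> ann cc uniq ne.
case: (boolP [exists h in N, (chi i h * eta j h) * (chi i' h * eta j' h)^* != 1]).
  by move=> /existsP [h /andP [hN hh]]; exists h.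
move=> /existsPn all1; exfalso; move/negP: ne; apply.
have cP : is_character (fun x => chi i x * eta j x).
  by apply: charM => //; case: (ann j).
have [i0 [_ Hu]] := uniq _ cP.
have a1 : in_annihilator N (fun g => chi i g * eta j g / chi i g).
  have -> : (fun g => chi i g * eta j g / chi i g) = eta j.
    apply: functional_extensionality => g; rewrite mulrC mulKf //.
    exact: (@char_nz _ _ g (cc i)).
  exact: ann.
have a2 : in_annihilator N (fun g => chi i g * eta j g / chi i' g).
  have -> : (fun g => chi i g * eta j g / chi i' g) =
            (fun g => chi i g * eta j g * (chi i' g)^*).
    by apply: functional_extensionality => g; rewrite (char_conj _ _ (cc i')).
  split; first by apply: charM => //; apply: charC.
  move=> h hN; have := all1 h; rewrite hN /= negbK => /eqP.
  rewrite rmorphM (proj2 (ann j') h hN) rmorph1 mulr1; exact: id.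
by apply/eqP; rewrite -(Hu _ a1) -(Hu _ a2).
Qed.

Lemma aux2 (x y s : algC) : (x / s)^* * (y / s) = x^* * y / (s * s^*).
Proof. by rewrite fmorph_div invfM mulrACA [(s^*)^-1 * _]mulrC. Qed.

Lemma Qentry {G : finZmodType} (D : {set G}) m (c c' : G -> algC) (eta : 'I_m -> G -> algC) b a :
  (span_mx D c eta *m adjmx (span_mx D c' eta)) b a =
  dotc (frame_vec D c (eta b)) (frame_vec D c' (eta a)).
Proof. by rewrite !mxE /dotc; apply: eq_bigr => t _; rewrite /adjmx !mxE. Qed.

Theorem mainTheorem1 (G : finZmodType) (m n k l1 l2 : nat) (N D : {set G})
  (eta : 'I_m -> G -> algC) (chi : 'I_n -> G -> algC) :
  is_subgroup N ->
  semiregular_dds m n k l1 l2 N D ->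
  (* {eta_j} is an enumeration of N^perp *)
  (forall j, in_annihilator N (eta j)) ->
  injective eta ->
  (forall psi, in_annihilator N psi -> exists j, eta j = psi) ->
  (* {chi_i} is a set of coset representatives of \hat G / N^perp *)
  (forall i, is_character (chi i)) ->
  (forall psi, is_character psi ->
     exists! i, in_annihilator N (fun g => psi g / chi i g)) ->
  (* each {e^i_j}_j is a family of m flat orthonormal vectors *)
  (forall i j, flat (frame_vec D (chi i) (eta j))) /\
  (forall i j j', dotc (frame_vec D (chi i) (eta j)) (frame_vec D (chi i) (eta j'))
                  = (j == j')%:R) /\
  (* each W_i has dimension m *)
  (forall i, \rank (span_mx D (chi i) eta) = m) /\
  (* orthogonal projections onto the W_i exist *)
  (forall i, exists P, is_orthoproj (span_mx D (chi i) eta) P) /\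
  (* {W_i} is an equichordal tight fusion frame with bound nm/k *)
  (forall P : 'I_n -> 'M[algC]_#|D|,
     (forall i, is_orthoproj (span_mx D (chi i) eta) (P i)) ->
     \sum_(i < n) P i = ((n * m)%:R / k%:R)%:M /\
     exists c : algC, forall i i', i != i' -> \tr (P i *m P i') = c).
Proof.
move=> sN sr ann inj surj cc uniq.
have [[cG [cN [cD [h2 h1]]]] [hl hk]] := sr.
have ortho : forall i j j', dotc (frame_vec D (chi i) (eta j)) (frame_vec D (chi i) (eta j'))
                  = (j == j')%:R.
  by move=> i j j'; apply: (@ortho_frame _ N D m n k l1 l2 eta (chi i) j j' sr sN ann inj (cc i)).
have orthM : forall i, span_mx D (chi i) eta *m adjmx (span_mx D (chi i) eta) = 1%:M.
  by move=> i; apply/matrixP => j j'; rewrite Qentry ortho !mxE.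
split; first by move=> i j; apply: flat_frame; [exact: cc | case: (ann j)].
split; first exact: ortho.
split; first by move=> i; apply: rank_orth.
split; first by move=> i; exists (adjmx (span_mx D (chi i) eta) *m span_mx D (chi i) eta); apply: proj_exists.
move=> P hP.
have eP : forall i, P i = adjmx (span_mx D (chi i) eta) *m span_mx D (chi i) eta.
  by move=> i; apply: proj_unique (hP i).
split.
  apply/matrixP => a b; rewrite summxE.
  have k0 : (#|D|%:R : algC) != 0 := @card_D_neq0 _ N D _ _ _ _ _ sr.
  have e1 : forall i : 'I_n, (P i) a b = (\sum_j (chi i (enum_val a) * eta j (enum_val a))^* *
      (chi i (enum_val b) * eta j (enum_val b))) / #|D|%:R.
    move=> i; rewrite eP !mxE mulr_suml; apply: eq_bigr => j _.
    by rewrite /adjmx !mxE aux2 sqrt_conjM.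
  under eq_bigr do rewrite e1.
  rewrite -mulr_suml (@col_orth _ N m n eta chi _ _ cG ann inj cc uniq).
  rewrite (inj_eq enum_val_inj) !mxE cG -cD mulnC.
  by case: (a == b); rewrite ?mulr1 ?mul0r ?mulr0 ?mulr1n ?mulr0n ?mul0r.
have k0 : (#|D|%:R : algC) != 0 := @card_D_neq0 _ N D _ _ _ _ _ sr.
have [dd _] := sr.
exists (((k%:R - l1%:R) / (#|D|%:R * #|D|%:R)) *+ m *+ m) => i i' ne.
rewrite !eP.
set A := span_mx D (chi i) eta; set B := span_mx D (chi i') eta.
have -> : \tr (adjmx A *m A *m (adjmx B *m B)) = \tr (adjmx (A *m adjmx B) *m (A *m adjmx B)).
  rewrite adjmxM adjmxK !mulmxA [in LHS]mxtrace_mulC !mulmxA //.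
rewrite /mxtrace.
rewrite (eq_bigr (fun _ => ((k%:R - l1%:R) / (#|D|%:R * #|D|%:R)) *+ m)).
  by rewrite sumr_const card_ord.
move=> a _; rewrite mxE.
rewrite (eq_bigr (fun _ => ((k%:R - l1%:R) / (#|D|%:R * #|D|%:R)))).
  by rewrite sumr_const card_ord.
move=> b _.
rewrite /adjmx mxE mxE -/(adjmx B) /A /B !Qentry dotc_frame aux2 conjC_nat.
congr (_ / _).
have [h hN hh] := @nonperp _ N m n eta chi i i' b a ann cc uniq ne.
by rewrite mulrC (@dds_nonperp _ N D _ m n k l1 l2 h dd sN _ hN hh) //; apply: charM; [apply: charM; [exact: cc | case: (ann b)] |
  apply: charC; apply: charM; [exact: cc | case: (ann a)]].
Qed.
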